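(* Let $A, M, F \in \mathbb{C}^{n\times n}$ with $M$ and $F$ nonsingular, and let $I$ be the $n\times n$ identity matrix. Define the $2n\times 2n$ matrix \[ Q := \begin{bmatrix} 0 & I - M^{-1}A \\ I - F^{-1}A & 0 \end{bmatrix}. \] If $\rho(|Q|) < 1$, then \[ \rho\left(\left| I - F^{-1}(M + F - A) M^{-1} A \right|\right) < 1. \]
   Context: For a matrix $\mathcal A$, $|\mathcal A|$ denotes the entrywise absolute value (modulus) and $\rho(\mathcal A)$ denotes its spectral radius. *)

(* Defs.v *)
From HB Require Import structures.
From mathcomp Require Import all_boot all_order all_algebra.
Set Implicit Arguments. Unset Strict Implicit. Unset Printing Implicit Defensive.
Import Order.TTheory GRing.Theory Num.Theory.
Local Open Scope ring_scope.

Definition mxabs (C : numClosedFieldType) (m n : nat) (A : 'M[C]_(m, n)) :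
  'M[C]_(m, n) := map_mx (fun x => `|x|) A.

(* The eigenvalues of A, listed with algebraic multiplicity: the roots of
   its characteristic polynomial (which splits since C is algebraically
   closed). *)
Definition eigenvalues (C : numClosedFieldType) (n : nat) (A : 'M[C]_n) : seq C :=
  sval (closed_field_poly_normal (char_poly A)).

Definition spectral_radius (C : numClosedFieldType) (n : nat) (A : 'M[C]_n) : C :=
  \big[Num.max/0]_(z <- eigenvalues A) `|z|.

(* Main.v *)
Require Import Defs.
From HB Require Import structures.
From mathcomp Require Import all_boot all_order all_algebra.
Set Implicit Arguments. Unset Strict Implicit. Unset Printing Implicit Defensive.
Import Order.TTheory GRing.Theory Num.Theory.
Local Open Scope ring_scope.

Definition realp (C : numClosedFieldType) (p : {poly C}) :=
  map_poly (@Num.conj C) p = p.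

Lemma realp_horner (C : numClosedFieldType) (p : {poly C}) t :
  realp p -> t \is Num.real -> p.[t] \is Num.real.
Proof.
move=> rp rt; apply/CrealP.
by rewrite -horner_map /= rp (conj_Creal rt).
Qed.

Lemma realp_cancel (C : numClosedFieldType) (p q D : {poly C}) :
  realp p -> realp D -> D != 0 -> p = q * D -> realp q.
Proof.
move=> rp rD D0 E; apply: (mulIf D0).
have := congr1 (map_poly (@Num.conj C)) E.
by rewrite rmorphM /= rp rD -E => /esym.
Qed.

Lemma normsub_gt0 (C : numClosedFieldType) (t z : C) :
  t \is Num.real -> t != z -> 0 < (t - z^*) * (t - z).
Proof.
move=> rt tz; rewrite mulrC.
have -> : t - z^* = (t - z)^* by rewrite rmorphB /= (conj_Creal rt).
by rewrite -normCK exprn_gt0 // normr_gt0 subr_eq0.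
Qed.

Lemma SC (C : numClosedFieldType) k : forall (p : {poly C}), (size p < k)%N ->
  realp p -> forall a b, a \is Num.real -> a <= b ->
  (forall t, a <= t -> t <= b -> ~~ root p t) -> 0 < p.[a] * p.[b].
Proof.
elim: k => // k IH p szp rp a b ra ab nr.
have rb : b \is Num.real by rewrite -(ler_real ab).
have p0 : p != 0.
  by apply: contraNneq (nr a (lexx a) ab) => ->; rewrite root0.
have [sp|sp] := leqP (size p) 1.
  rewrite (size1_polyC sp) !hornerC.
  have c0 : p`_0 != 0.
    by apply: contraNneq p0 => c0; rewrite (size1_polyC sp) c0.
  have rc : (p`_0)^* = p`_0 by rewrite -{2}rp coef_map.
  by rewrite -{2}rc -normCK exprn_gt0 // normr_gt0.
have /closed_rootP [z rz] : size p != 1 by rewrite gtn_eqF.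
have sP : forall q D, p = q * D -> D != 0 -> (1 < size D)%N -> (size q < k)%N.
  move=> q D E D0 sD; have q0 : q != 0 by apply: contraNneq p0 => q0; rewrite E q0 mul0r.
  move: szp; rewrite E size_mul // ltnS => h; apply: leq_trans h.
  rewrite -ltnS prednK ?addn_gt0 ?lt0n ?size_poly_eq0 ?q0 //.
  by rewrite -addn1 ltn_add2l.
have rootq : forall q D, p = q * D -> forall t, root q t -> root p t.
  by move=> q D -> t; rewrite rootM => ->.
case rzr: (z \is Num.real).
  have [q E] := factor_theorem _ _ rz.
  have rD : realp ('X - z%:P).
    by rewrite /realp rmorphB /= map_polyX map_polyC /= (conj_Creal rzr).
  have hX : 'X - z%:P != 0 by rewrite polyXsubC_eq0.
  have rq := realp_cancel rp rD hX E.
  have := IH q (sP _ _ E hX ltac:(by rewrite size_XsubC)) rq a b ra ab.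
  have nrq : forall t, a <= t -> t <= b -> ~~ root q t.
    by move=> t ha tb; apply: contra (nr t ha tb); apply: (rootq _ _ E).
  move/(_ nrq) => qpos.
  rewrite E !hornerM !hornerXsubC mulrACA mulr_gt0 //.
  have nzab : ~~ ((a <= z) && (z <= b)).
    by apply/negP => /andP[h1 h2]; move: (nr z h1 h2); rewrite rz.
  have [za|az] := real_ltP rzr ra.
    by rewrite mulr_gt0 // subr_gt0 // (lt_le_trans za ab).
  have bz : b < z by rewrite real_ltNge //; move: nzab; rewrite az.
  by rewrite -mulrNN !opprB mulr_gt0 ?subr_gt0 // (le_lt_trans ab bz).
have zz : z^* != z by rewrite -CrealE rzr.
have rz' : root p z^*.
  by apply/eqP; rewrite -[p in p.[_]]rp horner_map (eqP rz) rmorph0.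
have [q1 E1] := factor_theorem _ _ rz.
have rq1 : root q1 z^*.
  move: rz'; rewrite E1 rootM /root hornerXsubC subr_eq0 (negbTE zz) orbF //.
have [q E2] := factor_theorem _ _ rq1.
set D := ('X - (z^*)%:P) * ('X - z%:P).
have E : p = q * D by rewrite E1 E2 /D mulrA.
have D0 : D != 0 by rewrite mulf_neq0 // polyXsubC_eq0.
have rD : realp D.
  rewrite /realp /D rmorphM /= !rmorphB /= map_polyX !map_polyC /= conjCK.
  by rewrite mulrC.
have sD : (1 < size D)%N by rewrite size_mul ?polyXsubC_eq0 // !size_XsubC.
have rq := realp_cancel rp rD D0 E.
have nrq : forall t, a <= t -> t <= b -> ~~ root q t.
  by move=> t ha tb; apply: contra (nr t ha tb); apply: (rootq _ _ E).
have qpos := IH q (sP _ _ E D0 sD) rq a b ra ab nrq.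
have Dpos : forall t, t \is Num.real -> 0 < D.[t].
  move=> t rt; rewrite /D hornerM !hornerXsubC normsub_gt0 //.
  by apply/eqP => tz; move: rzr; rewrite -tz rt.
by rewrite E (hornerM q D a) (hornerM q D b) mulrACA mulr_gt0 // mulr_gt0 // Dpos.
Qed.

Lemma le_sum_term (C : numClosedFieldType) n (F : 'I_n -> C) j :
  (forall i, 0 <= F i) -> F j <= \sum_i F i.
Proof.
move=> F0; rewrite (bigD1 j) //= lerDl sumr_ge0 // => i _; exact: F0.
Qed.

Lemma GL (C : numClosedFieldType) n (K : 'M[C]_n) (q : 'I_n -> C) t :
  (forall i j, 0 <= K i j) -> (forall i, 0 <= q i) ->
  (forall i, t * q i <= \sum_j K i j * q j) ->
  \sum_i \sum_j K i j < t -> forall i, q i = 0.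
Proof.
move=> K0 q0 hq St.
set S := \sum_i \sum_j K i j.
have h1 : t * \sum_i q i <= S * \sum_i q i.
  rewrite !mulr_sumr; apply: (le_trans (ler_sum _ (fun i _ => hq i))).
  rewrite exchange_big /=; apply: ler_sum => j _.
  rewrite -mulr_suml ler_wpM2r //.
  rewrite /S exchange_big /=.
  exact: (@le_sum_term C n (fun j0 => \sum_i K i j0) j (fun k => sumr_ge0 _ (fun i _ => K0 i k))).
have h2 : \sum_i q i <= 0.
  rewrite -subr_ge0 -mulrBl in h1.
  have tS : S - t < 0 by rewrite subr_lt0.
  by rewrite nmulr_rge0 in h1.
have h3 : \sum_i q i = 0 by apply/eqP; rewrite eq_le h2 sumr_ge0.
by move=> i; apply/eqP; move/eqP: h3; rewrite psumr_eq0 // => /allP/(_ i (mem_index_enum i)) /implyP ->.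
Qed.

Definition avec (C : numClosedFieldType) n (K : 'M[C]_n) (i : 'I_n) : {poly C} :=
  (\adj (char_poly_mx K) *m (const_mx 1 : 'cV_n)) i 0.

Lemma RT (C : numClosedFieldType) n (K : 'M[C]_n) t i :
  t * (avec K i).[t] - \sum_j K i j * (avec K j).[t] = (char_poly K).[t].
Proof.
have E : char_poly_mx K *m (\adj (char_poly_mx K) *m (const_mx 1 : 'cV_n))
   = (char_poly K) *: (const_mx 1 : 'cV_n) by rewrite mulmxA mul_mx_adj mul_scalar_mx.
have := congr1 (fun M : 'M[{poly C}]_(n,1) => (M i 0).[t]) E.
rewrite /= !mxE mulr1 => <-.
have CPE : forall j, char_poly_mx K i j = 'X *+ (i == j) - (K i j)%:P.
  by move=> j; rewrite !mxE.
rewrite horner_sum /avec.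
under [in RHS]eq_bigr => j _ do rewrite CPE hornerM hornerD hornerN hornerMn hornerX hornerC mulrBl.
rewrite sumrB; congr (_ - _).
rewrite (bigD1 i) //= eqxx mulr1n big1 ?addr0 // => j /negbTE; rewrite eq_sym => ->.
by rewrite mulr0n mul0r.
Qed.

Lemma conj_mx_id (C : numClosedFieldType) n (K : 'M[C]_n) :
  (forall i j, 0 <= K i j) -> map_mx (@Num.conj C) K = K.
Proof. by move=> K0; apply/matrixP => i j; rewrite mxE conj_Creal // ger0_real. Qed.

Lemma realp_char (C : numClosedFieldType) n (K : 'M[C]_n) :
  (forall i j, 0 <= K i j) -> realp (char_poly K).
Proof. by move=> K0; rewrite /realp map_char_poly conj_mx_id. Qed.

Lemma realp_avec (C : numClosedFieldType) n (K : 'M[C]_n) i :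
  (forall i j, 0 <= K i j) -> realp (avec K i).
Proof.
move=> K0; rewrite /realp /avec.
have := congr1 (fun M : 'M[{poly C}]_(n,1) => M i 0) (map_mxM (map_poly (@Num.conj C)) (\adj (char_poly_mx K)) (const_mx 1 : 'cV_n)).
rewrite /= [in X in X = _]mxE => ->.
by rewrite map_mx_adj map_char_poly_mx conj_mx_id // map_const_mx rmorph1.
Qed.

Lemma sqr_real_gt0 (C : numClosedFieldType) (x : C) :
  x \is Num.real -> x != 0 -> 0 < x * x.
Proof.
by move=> rx x0; rewrite -{2}(conj_Creal rx) -normCK exprn_gt0 // normr_gt0.
Qed.

Lemma POS (C : numClosedFieldType) n (K : 'M[C]_n) u :
  (forall i j, 0 <= K i j) -> u \is Num.real -> \sum_i \sum_j K i j < u ->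
  (char_poly K).[u] != 0 /\ forall i, 0 < (avec K i).[u] * (char_poly K).[u].
Proof.
move=> K0 ru Su.
have S0 : 0 <= \sum_i \sum_j K i j by apply: sumr_ge0 => i _; apply: sumr_ge0.
have u0 : 0 < u := le_lt_trans S0 Su.
set d := (char_poly K).[u].
have d0 : d != 0.
  apply/negP => /eqP h.
  have : eigenvalue K u by rewrite eigenvalue_root_char /root -/d h.
  case/eigenvalueP => v hv v0.
  have q0 := @GL C n K^T (fun j => `|v 0 j|) u.
  have : forall j, `|v 0 j| = 0.
    apply: q0.
    - by move=> i j; rewrite mxE.
    - by move=> j.
    - move=> j.
      have := congr1 (fun M : 'rV_n => M 0 j) hv; rewrite /= !mxE => E.
      rewrite -(ger0_norm (ltW u0)) -normrM -E.
      apply: le_trans (ler_norm_sum _ _ _) _.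
      by apply: ler_sum => i _; rewrite mxE normrM (ger0_norm (K0 i j)) mulrC.
    - by under eq_bigr => i _ do under eq_bigr => j _ do rewrite mxE; rewrite exchange_big.
  move=> h0; move/negP: v0; apply; apply/eqP/rowP => j.
  by rewrite mxE; apply/eqP; rewrite -normr_eq0 h0.
split=> // i.
have rd : d \is Num.real by apply: realp_horner => //; apply: realp_char.
pose y j := (avec K j).[u] / d.
have ry : forall j, y j \is Num.real.
  by move=> j; rewrite rpredM ?rpredV //; apply: realp_horner => //; apply: realp_avec.
have Ey : forall j, u * y j = 1 + \sum_k K j k * y k.
  move=> j; have := RT K u j; rewrite -/d => E.
  have E' : u * (avec K j).[u] = d + \sum_k K j k * (avec K k).[u] by rewrite -E subrK.
  rewrite /y mulrA E' mulrDl divff // mulr_suml; congr (_ + _).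
  by apply: eq_bigr => k _; rewrite mulrA.
have q0 := @GL C n K (fun j => `|y j| - y j) u K0.
have hq : forall j, `|y j| - y j = 0.
  apply: q0 => //.
  - by move=> j; rewrite subr_ge0 real_ler_norm.
  - move=> j; rewrite mulrBr.
    under eq_bigr => k _ do rewrite mulrBr.
    rewrite sumrB Ey opprD addrA lerD2r lerBlDl.
    rewrite -(ger0_norm (ltW u0)) -normrM Ey.
    apply: le_trans (ler_normD _ _) _.
    rewrite normr1 lerD2l.
    apply: le_trans (ler_norm_sum _ _ _) _.
    by apply: ler_sum => k _; rewrite normrM (ger0_norm (K0 j k)).
have yi : 0 < y i.
  have yi0 : 0 <= y i by rewrite -[y i](subr0_eq (hq i)) normr_ge0.
  rewrite -(pmulr_rgt0 _ u0) Ey.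
  apply: lt_le_trans (ltr01) _; rewrite lerDl.
  by apply: sumr_ge0 => k _; rewrite mulr_ge0 // -[y k](subr0_eq (hq k)) normr_ge0.
have -> : (avec K i).[u] = y i * d by rewrite /y divfK.
by rewrite -mulrA mulr_gt0 // sqr_real_gt0.
Qed.

Lemma exists_max (C : numClosedFieldType) (L : seq C) :
  all (fun z => 1 <= z) L ->
  exists tau : C, [/\ 1 <= tau, tau = 1 \/ tau \in L & forall z, z \in L -> z <= tau].
Proof.
elim: L => [|a L IH] /=.
  by move=> _; exists 1; split => //; left.
case/andP => a1 /IH [tau [t1 tL tmax]].
have [at_|ta] := orP (real_leVge (ger1_real a1) (ger1_real t1)).
  exists tau; split => //.
    by case: tL => [->|h]; [left|right; rewrite inE h orbT].
  by move=> z; rewrite inE => /orP[/eqP ->|/tmax].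
exists a; split => //; first by right; rewrite inE eqxx.
by move=> z; rewrite inE => /orP[/eqP ->|/tmax h] //; apply: le_trans h ta.
Qed.

Lemma LL (C : numClosedFieldType) n (K : 'M[C]_n) (w : 'rV[C]_n) :
  (forall i j, 0 <= K i j) -> (forall j, 0 <= w 0 j) -> w != 0 ->
  (forall j, w 0 j <= (w *m K) 0 j) ->
  (forall t, 1 <= t -> ~~ eigenvalue K t) -> False.
Proof.
move=> K0 w0 wn0 wK noeig.
set S := \sum_i \sum_j K i j.
have S0 : 0 <= S by apply: sumr_ge0 => i _; apply: sumr_ge0.
set d := char_poly K.
pose g := d * \prod_i avec K i.
have dnz : forall t, 1 <= t -> d.[t] != 0.
  by move=> t t1; have := noeig t t1; rewrite eigenvalue_root_char.
have rootgP : forall t, root g t = root d t || [exists i, root (avec K i) t].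
  move=> t; rewrite /g rootM; congr (_ || _).
  rewrite /root horner_prod; apply/prodf_eq0/existsP => [[i _ h]|[i h]].
    by exists i.
  by exists i.
have g0 : g != 0.
  have [||du hu] := @POS C n K (S + 1) K0.
  - by rewrite rpredD // ?rpred1 // ger0_real.
  - by rewrite ltrDl ltr01.
  apply/negP => /eqP g0.
  have : root g (S + 1) by rewrite g0 root0.
  rewrite rootgP {1}/root (negbTE du) /= => /existsP [i /eqP ai].
  by have := hu i; rewrite ai mul0r ltxx.
case: (closed_field_poly_normal g) => rs Eg.
have rootg : forall t, root g t = (t \in rs).
  by move=> t; rewrite {1}Eg rootZ ?lead_coef_eq0 // root_prod_XsubC.
pose L := [seq z <- rs | 1 <= z].
have [tau [t1 tL tmax]] := exists_max (filter_all (fun z : C => 1 <= z) rs).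
have rt : tau \is Num.real := ger1_real t1.
pose u := tau + S + 1.
have ru : u \is Num.real by rewrite !rpredD ?rpred1 // ger0_real.
have tau0 : 0 < tau := lt_le_trans ltr01 t1.
have Su : S < u by rewrite /u -addrA ltr_wpDl // ?(ltW tau0) // ltrDl ltr01.
have tu : tau <= u by rewrite /u -addrA lerDl addr_ge0 ?ler01.
have [du hu] := POS K0 ru Su.
have noroot : forall t, tau < t -> ~~ root g t.
  move=> t tt; apply/negP; rewrite rootg => trs.
  have : t \in L by rewrite mem_filter trs (le_trans t1 (ltW tt)).
  by move/tmax => h; have := le_lt_trans h tt; rewrite ltxx.
have hpos : forall i, 0 <= (avec K i).[tau] * d.[tau].
  move=> i; rewrite -hornerM; set h := avec K i * d.
  have rh : realp h by rewrite /realp rmorphM /= realp_avec // realp_char.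
  have rht : h.[tau] \is Num.real by apply: realp_horner.
  rewrite real_leNgt ?rpred0 //; apply/negP => neg.
  have := @SC C (size h).+1 h (leqnn _) rh tau u rt tu.
  have nr : forall t, tau <= t -> t <= u -> ~~ root h t.
    move=> t ht _; case: (eqVneq t tau) => [->|ne].
      by rewrite /root lt_eqF.
    have tt : tau < t by rewrite lt_neqAle eq_sym ne ht.
    apply: contra (noroot t tt); rewrite rootM rootgP => /orP[ai|->//].
    by rewrite orbC; apply/orP; left; apply/existsP; exists i.
  have hu' : 0 < h.[u] by rewrite /h hornerM hu.
  have ng : h.[tau] * h.[u] < 0 by rewrite pmulr_llt0.
  by move/(_ nr)/(lt_trans ng); rewrite ltxx.
have dtau := dnz tau t1.
have rdt : d.[tau] \is Num.real by apply: realp_horner => //; apply: realp_char.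
pose x j := (avec K j).[tau] / d.[tau].
have xpos : forall j, 0 <= x j.
  move=> j; have -> : x j = ((avec K j).[tau] * d.[tau]) / (d.[tau] * d.[tau]).
    by rewrite /x invfM mulrA mulfK.
  by rewrite divr_ge0 // ltW // sqr_real_gt0.
have Ex : forall j, tau * x j - \sum_k K j k * x k = 1.
  move=> j; have := RT K tau j; rewrite -/d => E.
  have -> : \sum_k K j k * x k = (\sum_k K j k * (avec K k).[tau]) / d.[tau].
    by rewrite mulr_suml; apply: eq_bigr => k _; rewrite mulrA.
  by rewrite /x mulrA -mulrBl E divff.
case: tL => [t_1|tinL].
  have sw : 0 < \sum_j w 0 j.
    rewrite lt_def sumr_ge0 // andbT; apply/negP => /eqP sw0.
    move/negP: wn0; apply; apply/eqP/rowP => j.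
    by rewrite mxE (psumr_eq0P (fun j _ => w0 j) sw0).
  have : \sum_j w 0 j = \sum_j w 0 j * x j - \sum_k (w *m K) 0 k * x k.
    transitivity (\sum_j w 0 j * (tau * x j - \sum_k K j k * x k)).
      by apply: eq_bigr => j _; rewrite Ex mulr1.
    rewrite t_1; under eq_bigr => j _ do rewrite mul1r mulrBr.
    rewrite sumrB; congr (_ - _).
    under eq_bigr => j _ do rewrite mulr_sumr.
    rewrite exchange_big /=; apply: eq_bigr => k _.
    by rewrite mxE mulr_suml; apply: eq_bigr => j _; rewrite mulrA.
  move=> E; move: sw; rewrite E subr_gt0 => h.
  have : \sum_k (w *m K) 0 k * x k >= \sum_j w 0 j * x j.
    by apply: ler_sum => k _; rewrite ler_wpM2r.
  by move=> h2; have := lt_le_trans h h2; rewrite ltxx.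
move: tinL; rewrite mem_filter => /andP[_ trs].
move: trs; rewrite -rootg rootgP {1}/root (negbTE dtau) /= => /existsP [i /eqP ai].
have := Ex i; rewrite /x ai mul0r mulr0 sub0r => E.
have : 0 <= \sum_k K i k * x k by apply: sumr_ge0 => k _; rewrite mulr_ge0.
rewrite -oppr_le0 E => h; have := lt_le_trans ltr01 h; rewrite ltxx.
done.
Qed.

Lemma zmod_id (V : zmodType) (o X Y Z : V) : o - (X + Y - Z) = (o - Y) - (X - Z).
Proof. by rewrite !opprD !opprK !addrA [o - X - Y]addrAC. Qed.

Lemma bigmax_props (C : numClosedFieldType) (s : seq C) :
  [/\ 0 <= \big[Num.max/0]_(z <- s) `|z|,
      forall z, z \in s -> `|z| <= \big[Num.max/0]_(z <- s) `|z| &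
      1 <= \big[Num.max/0]_(z <- s) `|z| -> exists2 z, z \in s & 1 <= `|z|].
Proof.
elim: s => [|a s [IH0 IHle IHge]].
  rewrite big_nil; split => //.
  by rewrite ler10.
rewrite big_cons; set m := \big[Num.max/0]_(z <- s) `|z|.
rewrite /Num.max /Order.max.
have ra : `|a| \is Num.real by rewrite ger0_real.
have rm : m \is Num.real by rewrite ger0_real.
case: ifP => am; split => //.
- by move=> z; rewrite inE => /orP[/eqP ->|/IHle //]; apply: ltW.
- by move=> /IHge [z zs z1]; exists z => //; rewrite inE zs orbT.
- move=> z; rewrite inE => /orP[/eqP -> //|/IHle h].
  by apply: le_trans h _; rewrite real_leNgt // am.
- by move=> h; exists a => //; rewrite inE eqxx.
Qed.

Lemma eigenvalues_mem (C : numClosedFieldType) n (A : 'M[C]_n) z :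
  (z \in eigenvalues A) = eigenvalue A z.
Proof.
rewrite /eigenvalues; case: closed_field_poly_normal => /= rs E.
rewrite eigenvalue_root_char E rootZ ?root_prod_XsubC //.
by rewrite (monicP (char_poly_monic A)) oner_eq0.
Qed.

Lemma sr_ge (C : numClosedFieldType) n (A : 'M[C]_n) z :
  eigenvalue A z -> `|z| <= spectral_radius A.
Proof.
by rewrite -eigenvalues_mem => h; have [_ H _] := bigmax_props (eigenvalues A); apply: H.
Qed.

Lemma sr_real (C : numClosedFieldType) n (A : 'M[C]_n) :
  spectral_radius A \is Num.real.
Proof. by have [H _ _] := bigmax_props (eigenvalues A); apply: ger0_real. Qed.

Lemma sr_ge1 (C : numClosedFieldType) n (A : 'M[C]_n) :
  1 <= spectral_radius A -> exists2 z, eigenvalue A z & 1 <= `|z|.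
Proof.
have [_ _ H] := bigmax_props (eigenvalues A).
by move=> /H [z zs z1]; exists z => //; rewrite -eigenvalues_mem.
Qed.

Lemma step1 (C : numClosedFieldType) n (G E : 'M[C]_n) :
  1 <= spectral_radius (mxabs (G *m E)) ->
  exists2 y : 'rV[C]_n, y != 0 /\ (forall j, 0 <= y 0 j) &
    forall j, y 0 j <= (y *m (mxabs G *m mxabs E)) 0 j.
Proof.
move=> /sr_ge1 [lam /eigenvalueP [v hv v0] l1].
exists (map_mx (fun x => `|x|) v).
  split; last by move=> j; rewrite mxE.
  apply/negP => /eqP h; move/negP: v0; apply; apply/eqP/matrixP => i j.
  have := congr1 (fun M : 'rV_n => M i j) h.
  by rewrite /= !mxE => /eqP; rewrite normr_eq0 => /eqP.
move=> j; have := congr1 (fun M : 'rV_n => M 0 j) hv; rewrite /= !mxE => Ej.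
apply: (le_trans (ler_peMl (normr_ge0 _) l1)).
rewrite -normrM -Ej; apply: le_trans (ler_norm_sum _ _ _) _.
apply: ler_sum => i _; rewrite !mxE normrM normr_id ler_wpM2l //.
apply: le_trans (ler_norm_sum _ _ _) _.
by apply: ler_sum => k _; rewrite !mxE normrM.
Qed.

Lemma step2 (C : numClosedFieldType) n (G E : 'M[C]_n) (y : 'rV[C]_n) :
  y != 0 -> (forall j, 0 <= y 0 j) ->
  (forall j, y 0 j <= (y *m (mxabs G *m mxabs E)) 0 j) ->
  spectral_radius (mxabs (block_mx 0 E G 0 : 'M[C]_(n + n))) < 1 -> False.
Proof.
move=> y0 ypos hy hQ.
set N := mxabs (block_mx 0 E G 0 : 'M_(n + n)) in hQ.
have NE : N = block_mx 0 (mxabs E) (mxabs G) 0.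
  rewrite /N /mxabs map_block_mx; congr block_mx; apply/matrixP => i j;
  by rewrite !mxE normr0.
have N0 : forall i j, 0 <= N i j by move=> i j; rewrite mxE.
apply: (@LL C (n + n) (N *m N) (row_mx 0 y)).
- by move=> i j; rewrite mxE; apply: sumr_ge0 => k _; apply: mulr_ge0.
- by move=> j; rewrite mxE; case: (split j) => k; rewrite ?mxE.
- by rewrite row_mx_eq0 negb_and y0 orbT.
- move=> j; rewrite mulmxA NE !mul_row_block !mulmx0 !mul0mx !addr0 !add0r mul0mx.
  rewrite -mulmxA; move: (y *m _) hy => z hz.
  by rewrite !mxE; case: (split j) => k; rewrite ?mxE.
move=> t t1; apply/negP => /eigenvalueP [v hv v0].
set s := sqrtC t.
have ss : s * s = t by rewrite -expr2 sqrtCK.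
set u := v *m N - s *: v.
have hu : u *m N = (- s) *: u.
  rewrite /u mulmxBl -mulmxA hv -scalemxAl scalerBr scalerA mulNr ss.
  by rewrite !scaleNr opprK addrC.
have sabs : 1 <= `|s|.
  rewrite real_leNgt ?ger0_real ?ler01 //; apply/negP => s1.
  have : `|s| ^+ 2 < 1 by rewrite exprn_ilt1.
  rewrite -normrX sqrtCK ger0_norm ?(le_trans ler01 t1) //.
  by move=> h; have := lt_le_trans h t1; rewrite ltxx.
case: (eqVneq u 0) => [u0|un0].
  have : eigenvalue N s by apply/eigenvalueP; exists v => //; apply/eqP; rewrite -subr_eq0 -/u u0.
  move/sr_ge => h; have := le_lt_trans (le_trans sabs h) hQ; rewrite ltxx.
  done.
have : eigenvalue N (- s) by apply/eigenvalueP; exists u.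
move/sr_ge; rewrite normrN => h; have := le_lt_trans (le_trans sabs h) hQ; rewrite ltxx.
done.
Qed.

Unset Implicit Arguments.

Theorem proposition1 (C : numClosedFieldType) (n : nat) (A M F : 'M[C]_n)
  (HM : M \in unitmx) (HF : F \in unitmx) :
  spectral_radius (mxabs (block_mx 0 (1%:M - invmx M *m A)
                                   (1%:M - invmx F *m A) 0 : 'M[C]_(n + n))) < 1 ->
  spectral_radius (mxabs (1%:M - invmx F *m (M + F - A) *m invmx M *m A)) < 1.
Proof.
move=> hQ.
have ET : 1%:M - invmx F *m (M + F - A) *m invmx M *m A =
  (1%:M - invmx F *m A) *m (1%:M - invmx M *m A).
  rewrite [in RHS]mulmxBl [in RHS]mul1mx [in RHS]mulmxBr mulmx1.
  rewrite mulmxBr mulmxDr (mulVmx HF) !mulmxBl !mulmxDl -(mulmxA _ M) (mulmxV HM).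
  by rewrite mulmx1 !mul1mx mulmxA zmod_id.
rewrite ET real_ltNge ?sr_real ?rpred1 //; apply/negP => /step1 [y [y0 yp] hy].
exact: (step2 y0 yp hy hQ).
Qed.
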